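(* Let $\mathcal{B}=(T,\bowtie)$ be a block of homogeneous transactions, let $k$ be the chromatic number of the conflict graph $(T,\bowtie)$, let $c_{\min}:T\to\{1,\dots,k\}$ be a proper vertex coloring with $k$ colors, $T_i=\{tx: c_{\min}(tx)=i\}$, and $\mathcal S_{c_{\min}}=\mathrm{LevelSchedule}(T_1,\dots,T_k)$. Then $\mathrm{Lt}_{\mathbb 1}(\mathcal S_{c_{\min}})=\mathrm{MinLt}_{\mathbb 1}(\mathcal{B})$, i.e., $\mathcal S_{c_{\min}}$ has minimum latency among all valid schedules of $\mathcal{B}$.
   Context: A block consists of a finite set $T$ of transactions with a symmetric irreflexive conflict relation $\bowtie$; the conflict graph is $(T,\bowtie)$. Homogeneous: all transaction lengths are taken to be $1$. A schedule is a set $\mathcal S\subseteq T\times T$ with $(T,\mathcal S)$ acyclic; it is valid if for every pair $tx\bowtie tx'$ there is a directed path in $(T,\mathcal S)$ from $tx$ to $tx'$ or from $tx'$ to $tx$. $\mathrm{Lt}_{\mathbb 1}(\mathcal S)$ is the maximum number of vertices on a directed path in $(T,\mathcal S)$, and $\mathrm{MinLt}_{\mathbb 1}(\mathcal{B})$ is the minimum of $\mathrm{Lt}_{\mathbb 1}(\mathcal S)$ over all valid schedules $\mathcal S$. $\mathrm{LevelSchedule}(B_1,\dots,B_k)$ for an ordered partition of $T$ into conflict-free sets: set $B_0=\emptyset$, $\mathcal S=\emptyset$; for $i=1,\dots,k$ and, for each $i$, for $j=i-1,\dots,0$ (decreasing): let $E=\{(u,v)\in B_j\times B_i: u\bowtie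 v\}$, let $P$ be the set of pairs $(x,y)$ with a directed path from $x$ to $y$ in the current $(T,\mathcal S)$, and set $\mathcal S\leftarrow\mathcal S\cup(E\setminus P)$; output $\mathcal S$. *)

(* Defs.v *)
From mathcomp Require Import all_boot.
Set Implicit Arguments. Unset Strict Implicit. Unset Printing Implicit Defensive.

Section Sched.
Variable T : finType.

Definition srel (S : {set T * T}) : rel T := fun x y => (x, y) \in S.

Definition acyclic (S : {set T * T}) : bool :=
  [forall x, forall y, ((x, y) \in S) ==> ~~ connect (srel S) y x].

Definition valid_schedule (conf : rel T) (S : {set T * T}) : bool :=
  acyclic S &&
  [forall x, forall y, conf x y ==> (connect (srel S) x y || connect (srel S) y x)].

Definition is_dpath (S : {set T * T}) (s : seq T) : bool :=
  if s is x :: p then path (srel S) x p else false.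

(* Lt_1(S): maximum number of vertices on a directed path of (T,S).
   (For acyclic S every directed path has at most #|T| vertices.) *)
Definition Lt (S : {set T * T}) : nat :=
  \max_(n < #|T|.+1 | [exists t : n.-tuple T, is_dpath S t]) n.

(* MinLt_1(B): minimum of Lt over all valid schedules
   (#|T| is an upper bound of Lt, used as neutral element). *)
Definition MinLt (conf : rel T) : nat :=
  \big[minn/#|T|]_(S : {set T * T} | valid_schedule conf S) Lt S.

Definition level_step (conf : rel T) (S : {set T * T}) (Bj Bi : {set T})
  : {set T * T} :=
  S :|: [set p | [&& p.1 \in Bj, p.2 \in Bi, conf p.1 p.2
                   & ~~ connect (srel S) p.1 p.2]].

(* LevelSchedule(B_1,...,B_k), blocks given by B : nat -> {set T}
   with B 0 = emptyset; for i = 1..k, for j = i-1 downto 0. *)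
Definition level_schedule (conf : rel T) (B : nat -> {set T}) (k : nat)
  : {set T * T} :=
  foldl (fun S i =>
           foldl (fun S j => level_step conf S (B j) (B i)) S (rev (iota 0 i)))
        set0 (iota 1 k).

(* proper colouring with colours 'I_k (colour i stands for colour i+1) *)
Definition proper_coloring (conf : rel T) (k : nat) (c : T -> 'I_k) : Prop :=
  forall x y, conf x y -> c x != c y.

Definition color_blocks (k : nat) (c : T -> 'I_k) (i : nat) : {set T} :=
  if i is i'.+1 then [set x | nat_of_ord (c x) == i'] else set0.

End Sched.

(* Main.v *)
Require Import Defs.
From mathcomp Require Import all_boot.
From mathcomp Require Import zify.
Set Implicit Arguments. Unset Strict Implicit.

Lemma foldl_ind (A : Type) (B : eqType) (f : A -> B -> A) (P : A -> Prop)
  (s : seq B) (a0 : A) :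
  P a0 -> (forall a b, b \in s -> P a -> P (f a b)) -> P (foldl f a0 s).
Proof.
elim: s a0 => //= b s IH a0 Pa H; apply: IH.
  by apply: H; rewrite ?mem_head.
by move=> a b' bs; apply: H; rewrite inE bs orbT.
Qed.

Lemma foldl_est (A : Type) (B : eqType) (f : A -> B -> A) (P : A -> Prop)
  (s : seq B) (a0 : A) (b0 : B) :
  (forall a b, P a -> P (f a b)) -> (forall a, P (f a b0)) -> b0 \in s ->
  P (foldl f a0 s).
Proof.
move=> Hp Hb; elim: s a0 => //= b s IH a0; rewrite inE => /orP [/eqP <-| bs].
  by apply: foldl_ind => // a b' _; apply: Hp.
exact: IH.
Qed.

Lemma connect_mono (T : finType) (S S' : {set T * T}) :
  S \subset S' -> forall x y, connect (srel S) x y -> connect (srel S') x y.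
Proof.
move=> sub; apply: connect_sub => a b ab; apply: connect1.
exact: (subsetP sub).
Qed.

Lemma acyc_uniq (T : finType) (S : {set T * T}) x p :
  acyclic S -> path (srel S) x p -> uniq (x :: p).
Proof.
move=> Hac; elim: p x => [//|y p IH] x; rewrite [path _ _ _]/= => /andP [xy pp].
rewrite cons_uniq (IH _ pp) andbT.
apply/negP => xin.
have := path_connect pp xin.
move: Hac => /forallP /(_ x) /forallP /(_ y) /implyP /(_ xy) /negP; exact.
Qed.

Lemma uniq_card (T : finType) (s : seq T) : uniq s -> size s <= #|T|.
Proof. by move=> U; rewrite -(card_uniqP U) max_card. Qed.

Lemma Lt_ge (T : finType) (S : {set T * T}) (s : seq T) :
  is_dpath S s -> size s <= #|T| -> size s <= Lt S.
Proof.
move=> Hp Hs; rewrite /Lt.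
have Hs' : size s < #|T|.+1 by [].
apply: (@leq_bigmax_cond _ _ (fun n : 'I_#|T|.+1 => nat_of_ord n) (Ordinal Hs')).
by apply/existsP; exists (in_tuple s).
Qed.

Definition hgt (T : finType) (S : {set T * T}) (x : T) : nat :=
  \max_(n < #|T| | [exists y, exists t : n.-tuple T,
                     path (srel S) y t && (last y t == x)]) n.

Lemma h_ge (T : finType) (S : {set T * T}) z (t : seq T) :
  path (srel S) z t -> size t < #|T| -> size t <= hgt S (last z t).
Proof.
move=> Hp Hs; rewrite /hgt.
apply: (@leq_bigmax_cond _ _ (fun n : 'I_#|T| => nat_of_ord n) (Ordinal Hs)).
apply/existsP; exists z; apply/existsP; exists (in_tuple t).
by rewrite /= Hp eqxx.
Qed.

Lemma h_lt_Lt (T : finType) (S : {set T * T}) x :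
  acyclic S -> hgt S x < Lt S.
Proof.
move=> Hac.
have H1 : 0 < Lt S.
  have := @Lt_ge T S [:: x] (erefl _); apply.
  by apply: uniq_card.
suff: hgt S x <= (Lt S).-1 by lia.
apply/bigmax_leqP => n /existsP [y /existsP [t /andP [Hp _]]].
have U := acyc_uniq Hac Hp.
have := @Lt_ge T S (y :: t) Hp (uniq_card U).
rewrite /= size_tuple; lia.
Qed.

Lemma h_incr (T : finType) (S : {set T * T}) x y :
  acyclic S -> connect (srel S) x y -> x != y -> hgt S x < hgt S y.
Proof.
move=> Hac /connectP [p Hp ->] Hne.
have Hsz : 0 < size p by case: p Hp Hne => //=; rewrite eqxx.
suff: hgt S x <= (hgt S (last x p)).-1.
  have := @h_ge T S x p Hp; move: (uniq_card (acyc_uniq Hac Hp)) => /= U.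
  move=> /(_ U); lia.
apply/bigmax_leqP => n /existsP [z /existsP [t /andP [Hz /eqP Hl]]].
have Hp' : path (srel S) z (t ++ p) by rewrite cat_path Hz Hl Hp.
have U := uniq_card (acyc_uniq Hac Hp').
have := @h_ge T S z (t ++ p) Hp'.
rewrite /= in U; rewrite last_cat Hl size_cat size_tuple.
move: U; rewrite size_cat size_tuple => U /(_ U); lia.
Qed.

Lemma bigmin_le (I : eqType) (r : seq I) (P : pred I) (F : I -> nat) d i0 :
  i0 \in r -> P i0 -> \big[minn/d]_(i <- r | P i) F i <= F i0.
Proof.
elim: r => //= a r IH; rewrite inE big_cons => /orP [/eqP -> Pa| ir Pi].
  by rewrite Pa geq_minl.
case: (P a); last exact: IH.
by rewrite geq_min IH ?orbT.
Qed.

Lemma level_edges (T : finType) (conf : rel T) k (c : T -> 'I_k) x y :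
  (x, y) \in level_schedule conf (color_blocks c) k -> c x < c y.
Proof.
rewrite /level_schedule; move: x y.
apply: (foldl_ind (P := fun S : {set T * T} => forall x y, (x, y) \in S -> c x < c y)).
  by move=> x y; rewrite inE.
move=> S i _ HS.
apply: (foldl_ind (P := fun S : {set T * T} => forall x y, (x, y) \in S -> c x < c y)) => // S' j; rewrite mem_rev mem_iota => /andP [_ ji] HS' x y.
rewrite /level_step inE => /orP [/HS' //|].
rewrite inE /= => /and4P [xj yi _ _].
move: xj yi ji; case: j => [|j]; first by rewrite /color_blocks inE.
case: i => [|i]; first by rewrite /color_blocks inE.
rewrite /color_blocks !inE => /eqP <- /eqP <-; lia.
Qed.

Lemma conn_le (T : finType) k (c : T -> 'I_k) (S : {set T * T}) a b :
  (forall x y, (x, y) \in S -> c x < c y) -> connect (srel S) a b -> c a <= c b.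
Proof.
move=> H /connectP [p Hp ->]; elim: p a Hp => [|z p IH] a //= /andP [az pz].
exact: leq_trans (ltnW (H _ _ az)) (IH _ pz).
Qed.

Lemma path_incr (T : finType) k (c : T -> 'I_k) (S : {set T * T}) a p :
  (forall x y, (x, y) \in S -> c x < c y) -> path (srel S) a p ->
  path ltn (c a) (map (fun z => nat_of_ord (c z)) p).
Proof.
move=> H; elim: p a => [|z p IH] a //= /andP [az pz].
by rewrite (H _ _ az) IH.
Qed.

Theorem theorem4 (T : finType) (conf : rel T)
  (Hsym : symmetric conf) (Hirr : irreflexive conf)
  (k : nat) (c : T -> 'I_k)
  (Hc : proper_coloring conf c)
  (Hchi : forall (k' : nat) (c' : T -> 'I_k'), proper_coloring conf c' -> k <= k') :
  valid_schedule conf (level_schedule conf (color_blocks c) k) /\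
  Lt (level_schedule conf (color_blocks c) k) = MinLt conf.
Proof.
set L := level_schedule conf (color_blocks c) k.
have HE : forall x y, (x, y) \in L -> c x < c y by move=> x y; apply: level_edges.
have Hac : acyclic L.
  apply/forallP => x; apply/forallP => y; apply/implyP => /HE xy.
  apply/negP => /(conn_le HE); rewrite leqNgt xy; done.
have Hval : valid_schedule conf L.
  rewrite /valid_schedule Hac /=.
  apply/forallP => x; apply/forallP => y; apply/implyP => cxy.
  suff gen : forall x y, conf x y -> c x < c y -> connect (srel L) x y.
    have := Hc _ _ cxy; rewrite neq_ltn => /orP [lt|lt].
      by rewrite gen.
    by apply/orP; right; apply: gen => //; rewrite Hsym.
  clear cxy x y => x y cxy lt.
  rewrite /L /level_schedule.
  apply: (@foldl_est _ _ _ (fun S : {set T * T} => connect (srel S) x y) _ _ ((c y).+1)).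
  - move=> S i HS; apply: (foldl_ind (P := fun S : {set T * T} => connect (srel S) x y)) => // S' j _; apply: connect_mono.
    exact: subsetUl.
  - move=> S.
    apply: (@foldl_est _ _ _ (fun S : {set T * T} => connect (srel S) x y) _ _ ((c x).+1)).
    + by move=> S' j; apply: connect_mono; exact: subsetUl.
    + move=> S'; rewrite /level_step.
      case: (boolP (connect (srel S') x y)) => Hc'.
        by apply: connect_mono Hc'; exact: subsetUl.
      apply: connect1; rewrite /srel in_setU; apply/orP; right; rewrite inE /= /color_blocks !inE !eqxx cxy Hc' /=.
      done.
    + by rewrite mem_rev mem_iota.
  - by rewrite mem_iota; have := ltn_ord (c y); lia.
have HLt : Lt L <= k.
  apply/bigmax_leqP => n /existsP [[s sz]] /=.
  case: s sz => //= a p sz Hp.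
  rewrite -(eqP sz).
  have Hs : sorted ltn (map (fun z => nat_of_ord (c z)) (a :: p)).
    exact: path_incr HE Hp.
  have U := sorted_uniq ltn_trans ltnn Hs.
  have Hsub : {subset map (fun z => nat_of_ord (c z)) (a :: p) <= iota 0 k}.
    by move=> z /mapP [w _ ->]; rewrite mem_iota ltn_ord.
  have := uniq_leq_size U Hsub.
  by rewrite size_map size_iota.
have HkT : k <= #|T|.
  apply: (Hchi _ (fun x => enum_rank x)) => x y cxy.
  rewrite (inj_eq enum_rank_inj); apply/eqP => exy; subst.
  by rewrite Hirr in cxy.
have HkMin : k <= MinLt conf.
  rewrite /MinLt; apply: (big_ind (fun m => k <= m)) => //.
    by move=> a b; rewrite leq_min => -> ->.
  move=> S /andP [HacS /forallP Hcov].
  pose c' := fun x => Ordinal (h_lt_Lt x HacS).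
  apply: (Hchi _ c') => x y cxy.
  have nxy : x != y by apply/eqP => exy; subst; rewrite Hirr in cxy.
  apply/eqP => /(congr1 val) /= eh.
  move: (Hcov x) => /forallP /(_ y) /implyP /(_ cxy) /orP [cn|cn].
    by have := h_incr HacS cn nxy; rewrite eh ltnn.
  have nyx : y != x by rewrite eq_sym.
  by have := h_incr HacS cn nyx; rewrite eh ltnn.
have HMin : MinLt conf <= Lt L.
  rewrite /MinLt; apply: bigmin_le => //; exact: mem_index_enum.
split => //; apply/eqP; rewrite eqn_leq HMin andbT.
exact: leq_trans HLt HkMin.
Qed.
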